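(* Let $f:X\to Y$ be a quasi-isometry of semimetric spaces. Then $f$ maps each $\sim$-class of $X$ quasi-isometrically into a $\sim$-class of $Y$, and this induces an isomorphism of partially ordered sets $X/\!\sim\ \to\ Y/\!\sim$.
   Context: A semimetric space is a set $X$ with $d:X\times X\to\mathbb{R}^{\ge0}\cup\{\infty\}$ such that $d(x,y)=0$ iff $x=y$ and $d(x,z)\le d(x,y)+d(y,z)$ (no symmetry assumed; arithmetic with $\infty$ as usual). A map $f:X\to Y$ is a quasi-isometry if there are constants $1\le\lambda<\infty$, $0<\epsilon<\infty$, $0\le\mu<\infty$ with $\frac1\lambda d(x,y)-\epsilon\le d(f(x),f(y))\le\lambda d(x,y)+\epsilon$ for all $x,y\in X$ and, for every $y\in Y$, some $x\in X$ with $\max(d(y,f(x)),d(f(x),y))\le\mu$. On a semimetric space define the preorder $x\lesssim y$ iff $d(y,x)<\infty$, and $x\sim y$ iff $x\lesssim y$ and $y\lesssim x$; the $\sim$-classes are the strongly connected components, and $X/\!\sim$ is the set of $\sim$-classes partially ordered by the order induced from $\lesssim$. *)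

(* Defs.v *)
From HB Require Import structures.
From mathcomp Require Import all_boot all_order all_algebra.
From mathcomp Require Import boolp classical_sets reals constructive_ereal.
Set Implicit Arguments. Unset Strict Implicit. Unset Printing Implicit Defensive.
Import Order.TTheory GRing.Theory Num.Theory.
Local Open Scope classical_set_scope.
Local Open Scope ereal_scope.

(* A semimetric d : X -> X -> [0, +oo] (no symmetry assumed). *)
Record semimetric (R : realType) (X : Type) (d : X -> X -> \bar R) : Prop := {
  sm_ge0 : forall x y, 0 <= d x y ;
  sm_eq0 : forall x y, d x y = 0 <-> x = y ;
  sm_tri : forall x y z, d x z <= d x y + d y z }.

Definition qi_on (R : realType) (X Y : Type) (dX : X -> X -> \bar R)
  (dY : Y -> Y -> \bar R) (A : set X) (B : set Y) (f : X -> Y) : Prop :=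
  (forall x, A x -> B (f x)) /\
  exists lam eps mu : R, (1 <= lam)%R /\ (0 < eps)%R /\ (0 <= mu)%R /\
    (forall x y, A x -> A y ->
       (lam^-1)%:E * dX x y - eps%:E <= dY (f x) (f y) /\
       dY (f x) (f y) <= lam%:E * dX x y + eps%:E) /\
    (forall y, B y -> exists x, A x /\
       Order.max (dY y (f x)) (dY (f x) y) <= mu%:E).

Definition quasi_isometry (R : realType) (X Y : Type) (dX : X -> X -> \bar R)
  (dY : Y -> Y -> \bar R) (f : X -> Y) : Prop := qi_on dX dY setT setT f.

Definition preceq (R : realType) (X : Type) (d : X -> X -> \bar R) (x y : X) :
  Prop := d y x < +oo.
Definition sim (R : realType) (X : Type) (d : X -> X -> \bar R) (x y : X) :
  Prop := preceq d x y /\ preceq d y x.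

Definition cls (R : realType) (X : Type) (d : X -> X -> \bar R) (x : X) : set X :=
  [set y | sim d x y].

Definition quot (R : realType) (X : Type) (d : X -> X -> \bar R) :=
  {C : set X | exists x, C = cls d x}.

Definition mk_cls (R : realType) (X : Type) (d : X -> X -> \bar R) (x : X) :
  quot d := exist _ (cls d x) (ex_intro _ x erefl).

Definition quot_le (R : realType) (X : Type) (d : X -> X -> \bar R)
  (C D : quot d) : Prop :=
  exists x y, proj1_sig C x /\ proj1_sig D y /\ preceq d x y.

(* Main.v *)
Require Import Defs.
From mathcomp Require Import all_boot all_order all_algebra.
From mathcomp Require Import boolp classical_sets reals constructive_ereal.
Import Order.TTheory GRing.Theory Num.Theory.

Local Open Scope ereal_scope.

Lemma h_fwd (R : realType) (lam eps : R) (a b : \bar R) :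
  0 <= a -> a < +oo -> b <= lam%:E * a + eps%:E -> b < +oo.
Proof.
case: a => [r| |] // _ _ h; apply: le_lt_trans h _.
by rewrite -EFinM -EFinD ltry.
Qed.

Lemma h_bwd (R : realType) (lam eps : R) (a b : \bar R) : (0 < lam)%R ->
  0 <= a -> (lam^-1)%:E * a - eps%:E <= b -> b < +oo -> a < +oo.
Proof.
move=> l0; case: a => [r| |] //; first by rewrite ltry.
move=> _; rewrite mulry gtr0_sg ?invr_gt0 // mul1e /= => h1 h2.
by have := le_lt_trans h1 h2; rewrite ltxx.
Qed.

Lemma preceq_trans {R : realType} {X : Type} {d : X -> X -> \bar R} {x y z} :
  semimetric d -> preceq d x y -> preceq d y z -> preceq d x z.
Proof.
move=> sd h1 h2; rewrite /preceq.
apply: le_lt_trans (sm_tri sd z y x) _; exact: lte_add_pinfty.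
Qed.

Lemma sim_refl {R : realType} {X : Type} {d : X -> X -> \bar R} {x} :
  semimetric d -> sim d x x.
Proof.
move=> sd; rewrite /sim /preceq; have -> : d x x = 0 by apply/(sm_eq0 sd).
by split; rewrite ltry.
Qed.

Lemma sim_trans {R : realType} {X : Type} {d : X -> X -> \bar R} {x y z} :
  semimetric d -> sim d x y -> sim d y z -> sim d x z.
Proof.
move=> sd [h1 h2] [h3 h4]; split; apply: preceq_trans; eauto.
Qed.

Lemma sim_sym {R : realType} {X : Type} {d : X -> X -> \bar R} {x y} :
  sim d x y -> sim d y x.
Proof. by case. Qed.

Lemma cls_eq {R : realType} {X : Type} {d : X -> X -> \bar R} {x y} :
  semimetric d -> sim d x y -> cls d x = cls d y.
Proof.
move=> sd h; rewrite /cls; apply/seteqP; split => z /= hz.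
  exact: (sim_trans sd (sim_sym h) hz).
exact: (sim_trans sd h hz).
Qed.

Lemma cls_sim {R : realType} {X : Type} {d : X -> X -> \bar R} {x y} :
  semimetric d -> cls d x = cls d y -> sim d x y.
Proof.
move=> sd h; have : cls d y y by exact: sim_refl.
by rewrite -h.
Qed.

Lemma quot_eq {R : realType} {X : Type} {d : X -> X -> \bar R} (C D : quot d) :
  proj1_sig C = proj1_sig D -> C = D.
Proof.
case: C => C hC; case: D => D hD /= h; subst; congr exist; apply: Prop_irrelevance.
Qed.

Theorem proposition4p4 (R : realType) (X Y : Type)
  (dX : X -> X -> \bar R) (dY : Y -> Y -> \bar R) (f : X -> Y) :
  semimetric dX -> semimetric dY -> quasi_isometry dX dY f ->
  (forall x : X, exists y : Y, qi_on dX dY (cls dX x) (cls dY y) f) /\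
  exists F : quot dX -> quot dY,
    (forall x : X, F (mk_cls dX x) = mk_cls dY (f x)) /\
    bijective F /\
    (forall C D : quot dX, quot_le C D <-> quot_le (F C) (F D)).
Proof.
move=> sX sY [_ [lam [eps [mu [l1 [e0 [m0 [hb hs]]]]]]]].
have l0 : (0 < lam)%R by apply: lt_le_trans l1; rewrite ltr01.
have fwd : forall a b, dX a b < +oo -> dY (f a) (f b) < +oo.
  move=> a b h; have [_ h2] := hb a b I I.
  exact: h_fwd (sm_ge0 sX a b) h h2.
have bwd : forall a b, dY (f a) (f b) < +oo -> dX a b < +oo.
  move=> a b h; have [h1 _] := hb a b I I.
  exact: h_bwd l0 (sm_ge0 sX a b) h1 h.
have simf : forall a b, sim dX a b <-> sim dY (f a) (f b).
  move=> a b; split; case=> h1 h2; split; rewrite /preceq; auto.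
have near : forall y, exists x, sim dY y (f x).
  move=> y; have [x [_ hx]] := hs y I; exists x.
  move: hx; rewrite ge_max => /andP[h1 h2].
  by split; rewrite /preceq; apply: le_lt_trans (ltry mu); assumption.
split.
  move=> x; exists (f x); split.
    by move=> z hz; apply/simf.
  exists lam, eps, mu; do 3 (split; first by []); split.
    by move=> a b _ _; apply: hb.
  move=> y hy; have [x' [_ h]] := hs y I; exists x'; split; last by [].
  apply/simf; apply: (sim_trans sY hy).
  move: h; rewrite ge_max => /andP[h1 h2].
  by rewrite /sim /preceq; split; [apply: le_lt_trans h2 (ltry mu) | apply: le_lt_trans h1 (ltry mu)].
pose rep (C : quot dX) : X := projT1 (cid (proj2_sig C)).
have repP : forall C, proj1_sig C = cls dX (rep C) by move=> C; exact: (projT2 (cid (proj2_sig C))).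
exists (fun C => mk_cls dY (f (rep C))).
have hF : forall x : X, mk_cls dY (f (rep (mk_cls dX x))) = mk_cls dY (f x).
  move=> x; apply: quot_eq => /=; apply: cls_eq => //; apply/simf.
  by apply: cls_sim => //; rewrite -repP.
have inj : injective (fun C => mk_cls dY (f (rep C))).
  move=> C D /(congr1 (@proj1_sig _ _)) /= /(cls_sim sY) /simf h.
  by apply: quot_eq; rewrite !repP; apply: cls_eq.
have surj : forall D, exists C, mk_cls dY (f (rep C)) = D.
  move=> D; have [y0 hy0] := proj2_sig D.
  have [x hx] := near y0; exists (mk_cls dX x).
  rewrite hF; apply: quot_eq; rewrite hy0 /=; apply: cls_eq => //.
  exact: sim_sym.
split; first exact: hF.
split.
  exists (fun D => projT1 (cid (surj D))).
    by move=> C; apply: inj; exact: (projT2 (cid (surj _))).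
  by move=> D; exact: (projT2 (cid (surj D))).
move=> C D; rewrite /quot_le /= !repP; split.
  move=> [x [y [hx [hy hxy]]]]; exists (f x), (f y); split; first by apply/simf.
  by split; [apply/simf | apply: fwd].
move=> [u [v [hu [hv huv]]]]; exists (rep C), (rep D).
split; first exact: sim_refl.
split; first exact: sim_refl.
apply: bwd.
have h1 : preceq dY (f (rep C)) v by apply: preceq_trans (proj1 hu) huv.
exact: preceq_trans h1 (proj2 hv).
Qed.
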